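(* Let $\ell\ge1$ and $n\ge\ell+1$ be integers, let $\mu>\ell-\frac32$ be real, $C_0\in\mathbb R$, and let $F_0(r)=C_0\,r^{\mu-\frac12}e^{-r/2}L^{(2\mu)}_{n-\ell-1}(r)$ for $r>0$, extended to $r<0$ by $F_0(-r)=(-1)^\ell F_0(r)$. Let $F(r,t)$ be the solution of $$F_{tt}-F_{rr}-\frac2rF_r+\frac{\ell(\ell+1)}{r^2}F=0,\qquad F(r,0)=F_0(r),\ F_t(r,0)=0,$$ given by $$F(r,t)=\frac1{2r}\big[(r-t)F_0(r-t)+(r+t)F_0(r+t)\big]-\frac{\ell(\ell+1)\,t}{4r^2}\int_{r-t}^{r+t}F_0(s)\,{}_2F_1\!\Big(1-\ell,\ell+2;2;\frac{t^2-(r-s)^2}{4rs}\Big)ds.$$ Then for every $r>0$ there exist constants $C(r)>0$ and $T(r)>0$ such that for all $t\ge T(r)$, $$\Big|F(r,t)-\frac1{2r}\big[(r-t)F_0(r-t)+(r+t)F_0(r+t)\big]\Big|\le C(r)\,e^{-t/2}\,t^{\,n+\mu-\frac32}.$$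
   Context: $L^{(\alpha)}_k$ denotes the generalized Laguerre polynomial of degree $k$; ${}_2F_1$ is the Gauss hypergeometric function (a polynomial of degree $\ell-1$ in its last argument here). This $F_0$ is the radial wave function of a pionic atom. *)

(* Defs.v *)
From mathcomp Require Import all_boot all_order all_algebra.
From mathcomp Require Import all_classical all_reals all_analysis.
Set Implicit Arguments. Unset Strict Implicit. Unset Printing Implicit Defensive.
Import Order.TTheory GRing.Theory Num.Theory.
Local Open Scope ring_scope.

Section Defs.
Variable R : realType.

Definition gbinom (y : R) (j : nat) : R :=
  (\prod_(m < j) (y - m%:R)) / (j`!)%:R.

Definition laguerre (alpha : R) (k : nat) (x : R) : R :=
  \sum_(i < k.+1) (-1) ^+ i * gbinom (k%:R + alpha) (k - i) * x ^+ i / (i`!)%:R.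

Definition pochhammer (a : R) (m : nat) : R := \prod_(j < m) (a + j%:R).

(* Gauss hypergeometric 2F1(1-l, l+2; 2; z): the series terminates since
   (1-l)_m = 0 for m >= l, so it is the finite sum over m = 0..l-1. *)
Definition hyp2F1_l (l : nat) (z : R) : R :=
  \sum_(m < l)
     pochhammer (1 - l%:R) m * pochhammer (l%:R + 2) m
     / (pochhammer 2 m * (m`!)%:R) * z ^+ m.

(* F_0 on r > 0, extended oddly/evenly: F_0(-r) = (-1)^l F_0(r); F_0(0) := 0
   (irrelevant: measure zero, and only appears multiplied by 0). *)
Definition F0pos (l n : nat) (mu C0 r : R) : R :=
  C0 * powR r (mu - 2^-1) * expR (- r / 2) * laguerre (2 * mu) (n - l - 1) r.

Definition F0 (l n : nat) (mu C0 r : R) : R :=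
  if 0 < r then F0pos l n mu C0 r
  else if r < 0 then (-1) ^+ l * F0pos l n mu C0 (- r)
  else 0.

Definition Dpart (l n : nat) (mu C0 r t : R) : R :=
  (2 * r)^-1 * ((r - t) * F0 l n mu C0 (r - t) + (r + t) * F0 l n mu C0 (r + t)).

Definition Fsol (l n : nat) (mu C0 r t : R) : R :=
  Dpart l n mu C0 r t
  - (l%:R * (l%:R + 1) * t) / (4 * r ^+ 2) *
    Rintegral (@lebesgue_measure R) `[r - t, r + t]%classic
      (fun s => F0 l n mu C0 s *
                hyp2F1_l l ((t ^+ 2 - (r - s) ^+ 2) / (4 * r * s))).
End Defs.

(* Main.v *)
Require Import Defs.
From mathcomp Require Import all_boot all_order all_algebra.
From mathcomp Require Import all_classical all_reals all_analysis.
From mathcomp Require Import measurable_realfun.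
From mathcomp Require Import ring lra zify.
Import Order.TTheory GRing.Theory Num.Theory.
Local Open Scope ring_scope.

Section Alg.
Variable R : realType.
Variable l : nat.

Definition cc (m : nat) : R := pochhammer (1 - l%:R) m * pochhammer (l%:R + 2) m
   / (pochhammer 2 m * (m`!)%:R).
Definition PP : {poly R} := \poly_(m < l) cc m.

Lemma hypE z : hyp2F1_l l z = PP.[z].
Proof. by rewrite horner_poly /hyp2F1_l; apply: eq_bigr => i _. Qed.

Lemma poch2_gt0 m : 0 < pochhammer (2 : R) m.
Proof. by rewrite /pochhammer; apply: prodr_gt0 => i _; rewrite -natrD ltr0n. Qed.

Lemma ccS m : cc m.+1 * (m.+1 * m.+2)%:R
   = cc m * ((m.+1%:R - l%:R) * (m%:R + l%:R + 2)).
Proof.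
rewrite /cc /pochhammer !big_ord_recr /= factS !natrM.
have h1 := poch2_gt0 m; rewrite /pochhammer in h1.
set a := \prod_(i < m) _ in h1 *; set b := \prod_(i < m) _; set c := \prod_(i < m) _.
have hf : (m`!)%:R != 0 :> R by rewrite pnatr_eq0 -lt0n fact_gt0.
field.
have hm : 0 <= m%:R :> R by [].
rewrite hf gt_eqF //= gt_eqF ?gt_eqF //; lra.
Qed.

Definition qf (m : nat) : R := (m.+1%:R - l%:R) * (m%:R + l%:R + 2).

Lemma PS m : PP`_m.+1 * (m.+1 * m.+2)%:R = PP`_m * qf m.
Proof.
rewrite !coef_poly; case: (ltnP m.+1 l) => h.
  by rewrite (ltnW h) ccS.
rewrite mul0r; case: ltnP => h2; last by rewrite mul0r.
rewrite /qf (_ : l = m.+1); first by rewrite subrr mul0r mulr0.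
by apply/eqP; rewrite eqn_leq h h2.
Qed.

Definition ab : R := (1 - l%:R) * (l%:R + 2).

Definition Lop (y : {poly R}) : {poly R} :=
  y^`()^`() * 'X - y^`()^`() * 'X * 'X + 2%:P * y^`() - 4%:P * (y^`() * 'X)
  - ab%:P * y.

Lemma coefL y m : (Lop y)`_m = y`_m.+1 * (m.+1 * m.+2)%:R - y`_m * qf m.
Proof.
rewrite /Lop /qf /ab !(coefD, coefB, coefN, coefCM, coefMX, coef_deriv).
case: m => [|[|m]] /=; rewrite ?coef_deriv.
all: ring.
Qed.

Hypothesis l1 : (1 <= l)%N.

Lemma PP0 : PP`_0 = 1.
Proof.
by rewrite coef_poly l1 /cc /pochhammer !big_ord0 fact0 mulr1 mul1r invr1.
Qed.

Lemma Lchar y : Lop y = 0 -> y = y`_0 *: PP.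
Proof.
move=> H; apply/polyP => m; rewrite coefZ.
elim: m => [|m IH]; first by rewrite PP0 mulr1.
have := coefL y m; rewrite H coef0 => /eqP; rewrite eq_sym subr_eq0 => /eqP E.
have hk : (m.+1 * m.+2)%:R != 0 :> R by rewrite pnatr_eq0 muln_eq0.
apply: (mulIf hk); rewrite E IH -mulrA -PS mulrA //.
Qed.

Lemma LP : Lop PP = 0.
Proof. by apply/polyP => m; rewrite coefL coef0 PS subrr. Qed.

Definition uu : {poly R} := 1 - 'X.

Lemma LQ : Lop (PP \Po uu) = Lop PP \Po uu.
Proof.
have du : uu^`() = -1 by rewrite /uu derivB derivC derivX sub0r.
rewrite /Lop !deriv_comp du !mulrN1 !derivN !deriv_comp du.
rewrite !(comp_polyB, comp_polyD, comp_polyM, comp_polyC, comp_polyX).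
rewrite /uu; ring.
Qed.

Lemma size_uu : size uu = 2%N.
Proof. by rewrite /uu -opprB size_opp size_XsubC. Qed.

Lemma lead_uu : lead_coef uu = -1.
Proof. by rewrite /uu -opprB lead_coefN lead_coefXsubC. Qed.

Lemma cc_neq0 : cc l.-1 != 0.
Proof.
rewrite /cc /pochhammer; apply: mulf_neq0; last first.
  by rewrite invr_neq0 // mulf_neq0 ?gt_eqF ?poch2_gt0 // ltr0n fact_gt0.
apply: mulf_neq0; apply/prodf_neq0 => i _.
  have hi : (i.+1 < l)%N by case: i => i /=; case: l l1 => // k _; rewrite ltnS.
  have h2 : (i%:R + 1 < l%:R :> R) by rewrite natr1 ltr_nat.
  rewrite lt_eqF //; lra.
have hi : 0 <= i%:R :> R by [].
by rewrite gt_eqF // -natrD ltr0n addn_gt0 orbT.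
Qed.

Lemma symP : PP \Po uu = (-1) ^+ l.-1 *: PP.
Proof.
have H : Lop (PP \Po uu) = 0 by rewrite LQ LP comp_poly0.
have E := Lchar _ H.
have hs : size PP = l by rewrite size_poly_eq // cc_neq0.
have := @lead_coef_comp _ PP uu; rewrite size_uu => /(_ isT).
rewrite lead_uu hs {1}E lead_coefZ => h.
have hc : lead_coef PP != 0 by rewrite lead_coef_eq0 -size_poly_eq0 hs -lt0n.
rewrite {1}E; congr (_ *: _); apply: (mulIf hc); by rewrite h mulrC.
Qed.

Lemma hyp_sym (z : R) : hyp2F1_l l (1 - z) = (-1) ^+ l.-1 * hyp2F1_l l z.
Proof.
rewrite !hypE.
have -> : 1 - z = uu.[z] by rewrite /uu hornerD hornerN hornerX hornerC.
by rewrite -horner_comp symP hornerZ.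
Qed.
End Alg.

Set Implicit Arguments. Unset Strict Implicit.

Section Meas.
Variable R : realType.

Lemma mT_inv : measurable_fun setT (@GRing.inv R).
Proof.
apply: (eq_measurable_fun (fun x : R => if 0 <= x then powR x (-1) else - powR (-x) (-1))).
  move=> x _; case: ifPn => hx; first by rewrite powR_inv1.
  by rewrite powR_inv1 ?invrN ?opprK // oppr_ge0 ltW // ltNge.
apply: measurable_fun_if => //.
- exact: measurable_fun_ler.
- exact: measurable_funS (measurable_powR _).
- apply: (measurable_funS _ _ (_ : measurable_fun setT (fun x : R => - powR (-x) (-1)))) => //.
  apply: measurable_funN.
  exact: (measurableT_comp (measurable_powR (-1)) (@oppr_measurable R setT)).
Qed.

Lemma mT_sumF (I : Type) (s : seq I) (F : I -> R -> R) : (forall i, measurable_fun setT (F i)) ->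
  measurable_fun setT (fun x => \sum_(i <- s) F i x).
Proof.
move=> hF; elim: s => [|a s IH].
  by rewrite (_ : (fun x => _) = cst 0); [exact: measurable_cst|apply/funext => x; rewrite big_nil].
rewrite (_ : (fun x => _) = F a \+ (fun x => \sum_(i <- s) F i x)).
  exact: measurable_funD.
by apply/funext => x; rewrite big_cons.
Qed.

Lemma mT_lag a k : measurable_fun setT (@laguerre R a k).
Proof.
rewrite /laguerre; apply: mT_sumF => i.
apply: measurable_funM; try exact: measurable_cst.
apply: measurable_funM; try exact: measurable_cst.
exact: exprn_measurable.
Qed.

Lemma mT_hyp l : measurable_fun setT (@hyp2F1_l R l).
Proof.
rewrite /hyp2F1_l; apply: mT_sumF => i.
apply: measurable_funM; try exact: measurable_cst.
exact: exprn_measurable.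
Qed.

Lemma mT_F0pos l n mu C0 : measurable_fun setT (@F0pos R l n mu C0).
Proof.
rewrite /F0pos; apply: measurable_funM => //; last exact: mT_lag.
apply: measurable_funM => //.
  apply: measurable_funM; try exact: measurable_cst.
  exact: measurable_powR.
apply: measurableT_comp; first exact: measurable_expR.
apply: measurable_funM; try exact: measurable_cst.
exact: measurable_funN.
Qed.

Lemma mT_F0 l n mu C0 : measurable_fun setT (@F0 R l n mu C0).
Proof.
rewrite /F0; apply: measurable_fun_if => //.
- exact: measurable_fun_ltr.
- exact: measurable_funS (mT_F0pos _ _ _ _).
apply: (measurable_funS _ _ (_ : measurable_fun setT (fun x : R =>
   if x < 0 then (-1) ^+ l * F0pos l n mu C0 (- x) else 0))) => //.
apply: measurable_fun_if => //.
- exact: measurable_fun_ltr.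
- apply: measurable_funS (_ : measurable_fun setT (fun x : R => (-1) ^+ l * F0pos l n mu C0 (- x))) => //.
  apply: measurable_funM; try exact: measurable_cst.
  exact: (measurableT_comp (mT_F0pos _ _ _ _) (@oppr_measurable R setT)).
Qed.

Definition zz (r t s : R) := (t ^+ 2 - (r - s) ^+ 2) / (4 * r * s).
Definition gg l n mu C0 (r t s : R) := F0 l n mu C0 s * hyp2F1_l l (zz r t s).

Lemma mT_gg l n mu C0 r t : measurable_fun setT (gg l n mu C0 r t).
Proof.
rewrite /gg; apply: measurable_funM => //; first exact: mT_F0.
apply: measurableT_comp; first exact: mT_hyp.
rewrite /zz; apply: measurable_funM => //.
  apply: measurable_funB => //.
  apply: measurable_funX; apply: measurable_funB => //.
apply: measurableT_comp; first exact: mT_inv.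
exact: mulrl_measurable.
Qed.
End Meas.

Section Key.
Variable R : realType.
Local Notation mu := (@lebesgue_measure R).
Local Open Scope ereal_scope.

Lemma refl (phi : R -> \bar R) (A : set R) : measurable A ->
  measurable_fun setT phi -> (forall x, 0 <= phi x) ->
  \int[mu]_(x in A) phi x = \int[mu]_(x in -%R @^-1` A) phi (- x)%R.
Proof.
move=> mA mphi phi0.
rewrite (_ : (fun x => phi (- x)%R) = phi \o (-%R : R -> measurableTypeR R)) //.
have mo : measurable_fun setT (-%R : measurableTypeR R -> measurableTypeR R).
  exact: oppr_measurable.
rewrite -[RHS](ge0_integral_pushforward mo mu mA) //=; first last.
- exact: measurable_funS mphi.
by apply: eq_measure_integral => //= B mB BA; exact/esym/lebesgue_measureN.
Qed.

Lemma split3 (phi : R -> \bar R) (a b : R) : (0 <= a)%R -> (a <= b)%R ->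
  measurable_fun setT phi -> (forall x, 0 <= phi x) ->
  \int[mu]_(x in `[(- a)%R, b]) phi x = \int[mu]_(x in `[(- a)%R, 0%R[) phi x +
    (\int[mu]_(x in `[0%R, a]) phi x + \int[mu]_(x in `]a, b]) phi x).
Proof.
move=> a0 ab mphi phi0.
rewrite (@itv_bndbnd_setU _ _ _ (BLeft 0%R)); first last.
- by rewrite bnd_simp; lra.
- by rewrite bnd_simp; lra.
rewrite ge0_integral_setU //; first last.
- apply: (@lt_disjoint R (Interval _ _) (Interval _ _)) => x y.
  rewrite !in_itv /= => /andP[h0 h1] /andP[h2 h3]; lra.
- exact: measurable_funS mphi.
congr (_ + _).
rewrite (@itv_bndbnd_setU _ _ _ (BRight a)); first last.
- by rewrite bnd_simp.
- by rewrite bnd_simp.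
rewrite ge0_integral_setU //; first last.
- apply: (@lt_disjoint R (Interval _ _) (Interval _ _)) => x y.
  rewrite !in_itv /= => /andP[h0 h1] /andP[h2 h3]; lra.
- exact: measurable_funS mphi.
Qed.

Lemma fine_comb (U V : \bar R) (p q K : R) : 0 <= U -> 0 <= V ->
  (0 <= p <= K)%R -> (0 <= q <= K)%R ->
  (`|fine ((U + (V + p%:E)) - (V + (U + q%:E)))| <= K)%R.
Proof.
move=> hU hV /andP[p0 pK] /andP[q0 qK].
have K0 : (0 <= K)%R by lra.
case: U hU => [u| |] // hU; case: V hV => [v| |] // hV /=; rewrite ?normr0 //.
rewrite ler_norml; apply/andP; split; lra.
Qed.

Lemma bound_part (h : R -> \bar R) (a b M : R) : (a <= b)%R -> (0 <= M)%R ->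
  measurable_fun setT h -> (forall x, 0 <= h x) ->
  (forall x, (a < x <= b)%R -> h x <= M%:E) ->
  exists p : R, \int[mu]_(x in `]a, b]) h x = p%:E /\ (0 <= p <= M * (b - a))%R.
Proof.
move=> ab M0 mh h0 hM.
have hle : \int[mu]_(x in `]a, b]) h x <= (M * (b - a))%:E.
  apply: (@le_trans _ _ (\int[mu]_(x in `]a, b]) (cst M%:E) x)).
    apply: ge0_le_integral => //; exact: measurable_funS mh.
  rewrite (@integral_cst _ _ _ mu) //.
  have := lebesgue_measure_itv `]a, b]; rewrite /= lte_fin => ->.
  case: ltP => hab; first by rewrite -EFinD -EFinM.
  have -> : b = a by apply/eqP; rewrite eq_le ab hab.
  by rewrite mule0 subrr mulr0.
have hge : 0 <= \int[mu]_(x in `]a, b]) h x by apply: integral_ge0 => x _.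
move: hle hge; case: (\int[mu]_(x in `]a, b]) h x) => [p| |] //= hle hge.
by exists p; split => //; rewrite -!lee_fin hge hle.
Qed.

Lemma key (g : R -> R) (a b M : R) : (0 <= a)%R -> (a <= b)%R -> (0 <= M)%R ->
  measurable_fun setT g -> (forall x, g (- x) = - g x)%R ->
  (forall x, (a < x <= b)%R -> (`|g x| <= M)%R) ->
  (`|fine (\int[mu]_(x in `[(- a)%R, b]) (g x)%:E)| <= M * (b - a))%R.
Proof.
move=> a0 ab M0 mg godd gM.
set f := fun x => (g x)%:E.
have mf : measurable_fun setT f by apply/measurable_EFinP.
have fpN x : f^\+ (- x)%R = f^\- x by rewrite funeposE funenegE /f godd EFinN.
have fnN x : f^\- (- x)%R = f^\+ x by rewrite funeposE funenegE /f godd EFinN oppeK.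
have mfp := measurable_funepos mf; have mfn := measurable_funeneg mf.
have fp0 x : 0 <= f^\+ x by exact: funepos_ge0.
have fn0 x : 0 <= f^\- x by exact: funeneg_ge0.
rewrite integralE (split3 a0 ab mfp fp0) (split3 a0 ab mfn fn0).
rewrite !(@refl _ `[(- a)%R, 0%R[) //.
rewrite opp_preimage_itvbndbnd /= oppr0 opprK.
under eq_integral do rewrite fpN.
under [X in _ - (X + _)]eq_integral do rewrite fnN.
rewrite -!(@integral_itv_obnd_cbnd _ 0%R (BRight a)); first last.
- exact: measurable_funS mfp.
- exact: measurable_funS mfn.
have hbp : forall x, (a < x <= b)%R -> f^\+ x <= M%:E.
  move=> x hx; rewrite funeposE /f ge_max; apply/andP; split; last by rewrite lee_fin.
  by rewrite lee_fin; apply: le_trans (gM _ hx); exact: ler_norm.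
have hbn : forall x, (a < x <= b)%R -> f^\- x <= M%:E.
  move=> x hx; rewrite funenegE /f ge_max; apply/andP; split; last by rewrite lee_fin.
  by rewrite -EFinN lee_fin; apply: le_trans (gM _ hx); rewrite -normrN; exact: ler_norm.
have [p [-> hp]] := @bound_part _ a b M ab M0 mfp fp0 hbp.
have [q [-> hq]] := @bound_part _ a b M ab M0 mfn fn0 hbn.
apply: fine_comb => //; exact: integral_ge0.
Qed.
End Key.

Section Bounds.
Variable R : realType.

Lemma sum_bound1 (k : nat) (c : nat -> R) (z : R) : `|z| <= 1 ->
  `|\sum_(m < k) c m * z ^+ m| <= \sum_(m < k) `|c m|.
Proof.
move=> hz; apply: (le_trans (ler_norm_sum _ _ _)); apply: ler_sum => i _.
rewrite normrM normrX; apply: ler_piMr => //; exact: exprn_ile1.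
Qed.

Lemma sum_bound2 (k : nat) (c : nat -> R) (x X : R) : 1 <= X -> `|x| <= X ->
  `|\sum_(i < k.+1) c i * x ^+ i| <= (\sum_(i < k.+1) `|c i|) * X ^+ k.
Proof.
move=> hX hx; apply: (le_trans (ler_norm_sum _ _ _)); rewrite mulr_suml.
apply: ler_sum => i _; rewrite normrM normrX; apply: ler_wpM2l => //.
apply: (@le_trans _ _ (X ^+ i)).
  apply: lerXn2r => //; rewrite ?nnegrE //; lra.
by apply: ler_weXn2l => //; rewrite -ltnS.
Qed.

Lemma lag_bound (a : R) k x X : 1 <= X -> `|x| <= X ->
  `|laguerre a k x| <= (\sum_(i < k.+1) `|(-1) ^+ i * gbinom (k%:R + a) (k - i) / (i`!)%:R|) * X ^+ k.
Proof.
move=> hX hx; rewrite /laguerre.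
rewrite (eq_bigr (fun i : 'I_k.+1 => ((-1) ^+ i * gbinom (k%:R + a) (k - i) / (i`!)%:R) * x ^+ i)).
  exact: (sum_bound2 k (fun i => (-1) ^+ i * gbinom (k%:R + a) (k - i) / (i`!)%:R)).
by move=> i _; rewrite mulrAC.
Qed.

Definition Hc (l : nat) : R := \sum_(m < l) `|pochhammer (1 - l%:R) m * pochhammer (l%:R + 2) m
     / (pochhammer 2 m * (m`!)%:R)|.

Lemma hyp_bound l (z : R) : `|z| <= 1 -> `|hyp2F1_l l z| <= Hc l.
Proof.
move=> hz; rewrite /hyp2F1_l /Hc.
exact: (sum_bound1 l (fun m : nat => pochhammer (1 - l%:R) m * pochhammer (l%:R + 2) m
     / (pochhammer 2 m * (m`!)%:R))).
Qed.

Lemma F0_odd l n mu C0 (s : R) : F0 l n mu C0 (- s) = (-1) ^+ l * F0 l n mu C0 s.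
Proof.
rewrite /F0 oppr_gt0 oppr_lt0 opprK.
case: (ltrgtP s 0) => h.
- by rewrite mulrA -expr2 sqrr_sign mul1r.
- by [].
- by rewrite mulr0.
Qed.

Lemma zz_sym (r t s : R) : r != 0 -> s != 0 -> zz r t (- s) = 1 - zz r t s.
Proof. by move=> hr hs; rewrite /zz; field; rewrite hr hs. Qed.

Lemma gg_odd l n mu C0 (r t : R) : (1 <= l)%N -> r != 0 -> forall s,
  gg l n mu C0 r t (- s) = - gg l n mu C0 r t s.
Proof.
move=> l1 hr s; rewrite /gg.
have [->|hs] := eqVneq s 0.
  by rewrite oppr0 /F0 ltxx mul0r oppr0.
rewrite F0_odd zz_sym // hyp_sym //.
case: l l1 => // k _ /=.
have e : (-1) ^+ k * (-1) ^+ k = 1 :> R.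
  by rewrite -exprD addnn -mul2n exprM sqrrN expr1n expr1n.
rewrite exprS; set u := (-1) ^+ k; set F := F0 _ _ _ _ _; set H := hyp2F1_l _ _.
rewrite (_ : (-1 * u) * F * (u * H) = - (u * u) * (F * H)); first by rewrite e mulN1r.
ring.
Qed.

Lemma zz_bound (r t x : R) : 0 < r -> r <= t -> t - r < x <= r + t -> `|zz r t x| <= 1.
Proof.
move=> r0 rt /andP[h1 h2].
have x0 : 0 < x by lra.
have d0 : 0 < 4 * r * x by rewrite !mulr_gt0.
rewrite /zz ler_norml ler_pdivrMr // ler_pdivlMr // mul1r mulN1r.
apply/andP; split; nra.
Qed.

Lemma powR_bound (e x t : R) : 0 < t -> t / 2 <= x <= 2 * t ->
  powR x e <= (powR 2 e + powR (2^-1) e) * powR t e.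
Proof.
move=> t0 /andP[h1 h2].
have x0 : 0 <= x by lra.
have p2 := powR_ge0 2 e; have ph := powR_ge0 (2^-1) e; have pt := powR_ge0 t e.
case: (leP 0 e) => he.
  apply: (@le_trans _ _ (powR (2 * t) e)).
    by apply: ge0_ler_powR => //; rewrite nnegrE; lra.
  rewrite powRM //; last by lra.
  nra.
apply: (@le_trans _ _ (powR (2^-1 * t) e)).
  have f0 : 0 <= - e by lra.
  have xp : 0 < x by lra.
  have tp : 0 < 2^-1 * t by lra.
  have hA := powR_gt0 (- e) tp; have hB := powR_gt0 (- e) xp.
  have hC : powR (2^-1 * t) (- e) <= powR x (- e).
    by apply: ge0_ler_powR; rewrite ?nnegrE //; lra.
  rewrite -(opprK e) (powRN x (- e)) (powRN (2^-1 * t) (- e)).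
  by rewrite lef_pV2 ?posrE.
rewrite powRM //; last by lra.
nra.
Qed.

Definition Lam (l n : nat) (mu : R) : R :=
  \sum_(i < (n - l - 1).+1) `|(-1) ^+ i * gbinom ((n - l - 1)%:R + 2 * mu) ((n - l - 1) - i) / (i`!)%:R|.

Definition Acst l n (mu C0 r : R) : R :=
  `|C0| * (powR 2 (mu - 2^-1) + powR (2^-1) (mu - 2^-1)) * expR (r / 2)
  * (Lam l n mu * 2 ^+ (n - l - 1)) * Hc l.

Lemma Acst_ge0 l n (mu C0 r : R) : 0 <= Acst l n mu C0 r.
Proof.
rewrite /Acst; apply: mulr_ge0; last by apply: sumr_ge0.
apply: mulr_ge0; last by apply: mulr_ge0; [apply: sumr_ge0 | apply: exprn_ge0].
apply: mulr_ge0; last exact: expR_ge0.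
by apply: mulr_ge0 => //; apply: addr_ge0; exact: powR_ge0.
Qed.

Lemma gg_bound l n mu C0 (r t x : R) : 0 < r -> 2 * r <= t -> 1 <= t -> t - r < x <= r + t ->
  `|gg l n mu C0 r t x| <=
  Acst l n mu C0 r * (powR t (mu - 2^-1) * t ^+ (n - l - 1) * expR (- t / 2)).
Proof.
move=> r0 rt t1 /andP[h1 h2].
have x0 : 0 < x by lra.
have t0 : 0 < t by lra.
rewrite /gg /F0 x0 /F0pos.
set e := mu - 2^-1; set k := (n - l - 1)%N.
have hp : powR x e <= (powR 2 e + powR (2^-1) e) * powR t e.
  by apply: powR_bound => //; apply/andP; split; lra.
have he : expR (- x / 2) <= expR (r / 2) * expR (- t / 2).
  by rewrite -expRD ler_expR; lra.
have hl : `|laguerre (2 * mu) k x| <= Lam l n mu * 2 ^+ k * t ^+ k.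
  rewrite -mulrA -exprMn; apply: lag_bound; first lra.
  by rewrite ger0_norm; lra.
have hh : `|hyp2F1_l l (zz r t x)| <= Hc l.
  by apply: hyp_bound; apply: zz_bound => //; [lra | apply/andP; split].
rewrite !normrM (ger0_norm (powR_ge0 _ _)) (ger0_norm (expR_ge0 _)).
rewrite /Acst -/e -/k.
have -> : `|C0| * (powR 2 e + powR (2^-1) e) * expR (r / 2) * (Lam l n mu * 2 ^+ k) * Hc l *
  (powR t e * t ^+ k * expR (- t / 2)) =
  `|C0| * ((powR 2 e + powR (2^-1) e) * powR t e) * (expR (r / 2) * expR (- t / 2)) *
  (Lam l n mu * 2 ^+ k * t ^+ k) * Hc l by ring.
apply: ler_pM => //; first by rewrite !mulr_ge0 // ?powR_ge0 ?expR_ge0.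
apply: ler_pM => //; first by rewrite !mulr_ge0 // ?powR_ge0 ?expR_ge0.
apply: ler_pM => //; first by rewrite !mulr_ge0 // ?powR_ge0 ?expR_ge0.
apply: ler_pM => //; exact: powR_ge0.
Qed.
End Bounds.

Theorem lemma2p1 (R : realType) (l n : nat) (mu C0 : R) :
  (1 <= l)%N -> (l.+1 <= n)%N -> l%:R - 3 / 2 < mu ->
  forall r : R, 0 < r ->
  exists C : R, exists T : R, 0 < C /\ 0 < T /\
    forall t : R, T <= t ->
      `| Fsol l n mu C0 r t - Dpart l n mu C0 r t |
        <= C * expR (- t / 2) * powR t (n%:R + mu - 3 / 2).
Proof.
move=> l1 ln hmu r r0.
set e := mu - 2^-1; set k := (n - l - 1)%N.
have hl0 : 0 <= l%:R :> R by [].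
set K0 := l%:R * (l%:R + 1) / (4 * r ^+ 2).
have K00 : 0 <= K0.
  apply: divr_ge0; first by apply: mulr_ge0 => //; rewrite -natr1 ler0n.
  by apply: mulr_ge0 => //; exact: sqr_ge0.
have A0 := Acst_ge0 l n mu C0 r.
set A := Acst l n mu C0 r.
exists (K0 * A * (2 * r) + 1), (2 * r + 1); split.
  have : 0 <= K0 * A * (2 * r) by apply: mulr_ge0; [exact: mulr_ge0 | lra].
  lra.
split; first lra.
move=> t tT.
have t1 : 1 <= t by lra.
have t0 : 0 < t by lra.
have rt : 2 * r <= t by lra.
rewrite /Fsol addrAC subrr add0r normrN.
have hX : l%:R * (l%:R + 1) * t / (4 * r ^+ 2) = K0 * t by rewrite /K0 mulrAC.
rewrite hX normrM (ger0_norm (mulr_ge0 K00 (ltW t0))).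
rewrite (_ : r - t = - (t - r)); last by rewrite opprB.
set M := A * (powR t e * t ^+ k * expR (- t / 2)).
have M0 : 0 <= M.
  rewrite /M; apply: mulr_ge0 => //; apply: mulr_ge0; last exact: expR_ge0.
  by apply: mulr_ge0; [exact: powR_ge0 | apply: exprn_ge0; exact: ltW].
have hk := @key R (gg l n mu C0 r t) (t - r) (r + t) M.
have := hk ltac:(lra) ltac:(lra) M0 (@mT_gg R l n mu C0 r t) (@gg_odd R l n mu C0 r t l1 (lt0r_neq0 r0))
  (fun x hx => @gg_bound R l n mu C0 r t x r0 rt t1 hx).
rewrite /Rintegral => {}hk.
have hpow : t * t ^+ k * powR t e <= powR t (n%:R + mu - 3 / 2).
  have hkR : (k%:R : R) = n%:R - l%:R - 1.
    have : (k + l.+1 = n)%N by rewrite /k; lia.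
    move=> /(congr1 (fun m => m%:R : R)); rewrite natrD -natr1 => <-; ring.
  rewrite -(powR_mulrn k (ltW t0)) -{1}(powRr1 (ltW t0)) -!powRD; last 2 first.
  - by apply/implyP => _; rewrite gt_eqF.
  - by apply/implyP => _; rewrite gt_eqF.
  apply: ler_powR => //; rewrite hkR /e.
  have : 1 <= l%:R :> R by rewrite ler1n.
  lra.
apply: (le_trans (ler_wpM2l (mulr_ge0 K00 (ltW t0)) hk)).
rewrite /M (_ : r + t - (t - r) = 2 * r); last by ring.
have et0 := expR_ge0 (- t / 2).
have -> : K0 * t * (A * (powR t e * t ^+ k * expR (- t / 2)) * (2 * r)) =
  (K0 * A * (2 * r)) * expR (- t / 2) * (t * t ^+ k * powR t e) by ring.
have hc : 0 <= K0 * A * (2 * r) by apply: mulr_ge0; [exact: mulr_ge0 | lra].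
apply: ler_pM => //.
- exact: mulr_ge0.
- apply: mulr_ge0; last exact: powR_ge0.
  by apply: mulr_ge0; [exact: ltW | apply: exprn_ge0; exact: ltW].
- apply: ler_pM => //; lra.
Qed.
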